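(* Let $X$ be a random variable taking values in $\{0,1,2,\dots\}$ with finite mean, probability mass function $p_X$ and probability generating function $\Psi_X(t)=\mathrm{E}[t^X]$, $t\in[0,1]$, and suppose $X\in\Delta$. For $\mu>0$ set $D(t,\mu)=\Psi_X'(t)-\mu\Psi_X(t)$. For any natural number $k\ge 0$ let $f_k(\mu)=e^{-\mu}\left(1+\mu+\frac{\mu^2}{2!}+\dots+\frac{\mu^k}{k!}\right)$ and $$T^{(k)}=f_k(\mu)-p_X(0)\left(1+\mu+\dots+\frac{\mu^k}{k!}\right).$$ Then for any $\mu>0$ and any natural number $k$, $$\frac{1}{1+\mu+\dots+\frac{\mu^k}{k!}}\,|T^{(k)}|\le \int_0^1 |D(t,\mu)|\,dt\le e^{\mu}\,|T^{(k)}|.$$ In particular, for $k=0$, $$|e^{-\mu}-p_X(0)|\le \int_0^1|D(t,\mu)|\,dt\le e^{\mu}|e^{-\mu}-p_X(0)|.$$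
   Context: $\Delta$ denotes the class of distributions of random variables $X$ with values in $\{0,1,2,\dots\}$ (with finite mean) such that, for every $\mu>0$, the function $t\mapsto D(t,\mu)=\Psi_X'(t)-\mu\Psi_X(t)$ is either nonnegative for all $t\in[0,1]$ or nonpositive for all $t\in[0,1]$, where $\Psi_X(t)=\mathrm{E}[t^X]$ is the probability generating function and $\Psi_X'$ its derivative. *)

(* Defs.v *)
From Stdlib Require Import Reals.
From Coquelicot Require Import Coquelicot.
Open Scope R_scope.

Definition is_pmf_finite_mean (p : nat -> R) : Prop :=
  (forall n, 0 <= p n) /\ is_series p 1 /\ ex_series (fun n => INR n * p n).

Definition pgf (p : nat -> R) (t : R) : R := Series (fun n => p n * t ^ n).

(* Its derivative on [0,1] (one-sided at t = 1), written as the termwise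
   differentiated power series  sum_n (n+1) p(n+1) t^n  (= E[X t^(X-1)]). *)
Definition pgf' (p : nat -> R) (t : R) : R :=
  Series (fun n => INR (S n) * p (S n) * t ^ n).

Definition D_tmu (p : nat -> R) (t mu : R) : R := pgf' p t - mu * pgf p t.

Definition in_Delta (p : nat -> R) : Prop :=
  is_pmf_finite_mean p /\
  forall mu, 0 < mu ->
    (forall t, 0 <= t <= 1 -> 0 <= D_tmu p t mu) \/
    (forall t, 0 <= t <= 1 -> D_tmu p t mu <= 0).

Definition expsum (k : nat) (mu : R) : R :=
  sum_f_R0 (fun j => mu ^ j / INR (Factorial.fact j)) k.

Definition f_k (k : nat) (mu : R) : R := exp (- mu) * expsum k mu.

Definition T_k (p : nat -> R) (k : nat) (mu : R) : R :=
  f_k k mu - p 0%nat * expsum k mu.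

(* Main.v *)
Require Import Defs.
From Stdlib Require Import Reals Lra Lia.
From Coquelicot Require Import Coquelicot.
Open Scope R_scope.

Lemma tail_bound (u c : nat -> R) : (forall n, 0 <= c n) -> ex_series c ->
  (forall n, Rabs (u n) <= c n) ->
  ex_series u /\ forall N, Rabs (Series u - sum_f_R0 u N) <= Series c - sum_f_R0 c N.
Proof.
  intros Hc0 Hc Hu.
  assert (Eu : ex_series u) by (apply (ex_series_le u c); [exact Hu | exact Hc]).
  split; [exact Eu|]. intros N.
  assert (Ecs : ex_series (fun k => c (S N + k)%nat)) by (apply ex_series_incr_n; exact Hc).
  rewrite (Series_incr_n u (S N)); [|lia|exact Eu].
  rewrite (Series_incr_n c (S N)); [|lia|exact Hc].
  simpl Init.Nat.pred.
  replace (sum_f_R0 u N + Series (fun k : nat => u (S N + k)%nat) - sum_f_R0 u N)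
    with (Series (fun k : nat => u (S N + k)%nat)) by ring.
  replace (sum_f_R0 c N + Series (fun k : nat => c (S N + k)%nat) - sum_f_R0 c N)
    with (Series (fun k : nat => c (S N + k)%nat)) by ring.
  eapply Rle_trans. apply Series_Rabs.
  apply (@ex_series_le R_AbsRing R_CompleteNormedModule _ (fun k => c (S N + k)%nat)); [|exact Ecs].
  intros n. change (Rabs (Rabs (u (S N + n)%nat)) <= c (S N + n)%nat). rewrite Rabs_Rabsolu. apply Hu.
  apply Series_le; [|exact Ecs]. intros n. split; [apply Rabs_pos| apply Hu].
Qed.

Lemma mono_derive (c : R) (n : nat) t :
  is_derive (fun t => c * t ^ (S n)) t (INR (S n) * c * t ^ n).
Proof. auto_derive; auto. simpl. ring. Qed.

Lemma poly_ex_derive (c : nat -> R) N t :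
  ex_derive (fun t => sum_f_R0 (fun n => c n * t ^ n) N) t.
Proof.
  induction N as [|N IH]; simpl.
  - auto_derive; auto.
  - apply (ex_derive_plus (fun t => sum_f_R0 (fun n => c n * t ^ n) N) (fun t => c (S N) * (t * t^N))); auto.
    auto_derive; auto.
Qed.

Lemma poly_derive (p : nat -> R) N t :
  is_derive (fun t => sum_f_R0 (fun n => p n * t ^ n) (S N)) t
    (sum_f_R0 (fun n => INR (S n) * p (S n) * t ^ n) N).
Proof.
  induction N as [|N IH].
  - simpl. auto_derive; auto. ring.
  - change (is_derive (fun t => sum_f_R0 (fun n => p n * t ^ n) (S N) + p (S (S N)) * t ^ (S (S N))) t
       (sum_f_R0 (fun n => INR (S n) * p (S n) * t ^ n) N + INR (S (S N)) * p (S (S N)) * t ^ (S N))).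
    apply (is_derive_plus (fun t => sum_f_R0 (fun n => p n * t ^ n) (S N)) (fun t => p (S (S N)) * t ^ (S (S N)))).
    exact IH. apply mono_derive.
Qed.

Lemma unif_RInt (phiN : nat -> R -> R) (phi : R -> R) (eps : nat -> R) (h : nat -> R) :
  (forall N t, 0 <= t <= 1 -> Rabs (phiN N t - phi t) <= eps N) ->
  is_lim_seq eps 0 ->
  (forall N, is_RInt (phiN N) 0 1 (h N)) ->
  exists If, is_lim_seq h If /\ is_RInt phi 0 1 If.
Proof.
  intros Hb He Hi.
  set (c := fun t => Rmax 0 (Rmin 1 t)).
  assert (Hc : forall t, 0 <= c t <= 1).
  { intros t; unfold c; split. apply Rmax_l. apply Rmax_lub. lra. apply Rmin_l. }
  assert (Hct : forall t, Rmin 0 1 < t < Rmax 0 1 -> c t = t).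
  { intros t Ht. rewrite Rmin_left in Ht by lra. rewrite Rmax_right in Ht by lra.
    unfold c. rewrite Rmin_right by lra. rewrite Rmax_right by lra. reflexivity. }
  destruct (filterlim_RInt (fun N t => phiN N (c t)) 0 1 eventually eventually_filter
     (fun t => phi (c t)) h) as [If [H1 H2]].
  - intros N. apply (is_RInt_ext (phiN N)). intros t Ht. rewrite Hct; auto. apply Hi.
  - intros P [e HP]. destruct (proj2 (is_lim_seq_spec eps 0) He e) as [N0 HN0].
    exists N0. intros n Hn. apply HP. intros t.
    change (Rabs (phiN n (c t) - phi (c t)) < e).
    eapply Rle_lt_trans. apply Hb. apply Hc.
    specialize (HN0 n Hn). rewrite Rminus_0_r in HN0.
    eapply Rle_lt_trans. apply Rle_abs. exact HN0.
  - exists If. split. exact H1.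
    apply (is_RInt_ext (fun t => phi (c t))). intros t Ht. rewrite Hct; auto. exact H2.
Qed.

Lemma pow_le1 t n : 0 <= t <= 1 -> 0 <= t ^ n <= 1.
Proof. intros Ht. induction n; simpl; [lra|]. split; [apply Rmult_le_pos; lra| nra]. Qed.

Lemma exp_le' x y : x <= y -> exp x <= exp y.
Proof. intros H. destruct (Rle_lt_or_eq_dec _ _ H). left; apply exp_increasing; auto. subst; lra. Qed.

Lemma is_derive_eq (f : R -> R) x l l' : is_derive f x l -> l = l' -> is_derive f x l'.
Proof. intros H ->; exact H. Qed.

Lemma sum_pow1 (c : nat -> R) N : sum_f_R0 (fun n => c n * 1 ^ n) N = sum_f_R0 c N.
Proof. apply sum_eq. intros. rewrite pow1. ring. Qed.

Lemma sum_pow0 (c : nat -> R) N : sum_f_R0 (fun n => c n * 0 ^ n) N = c 0%nat.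
Proof. induction N; simpl. ring. rewrite IHN. ring. Qed.

Lemma expsum_ge1 k mu : 0 <= mu -> 1 <= expsum k mu.
Proof.
  intros H. unfold expsum. induction k; simpl. lra.
  assert (0 <= mu * mu ^ k / INR (Factorial.fact k + k * Factorial.fact k)).
  { apply Rmult_le_pos. apply Rmult_le_pos; auto. apply pow_le; auto.
    left. apply Rinv_0_lt_compat. apply (INR_fact_lt_0 (S k)). }
  lra.
Qed.

Lemma series_lim (c : nat -> R) l : is_series c l -> is_lim_seq (sum_f_R0 c) l.
Proof. intros H. apply (is_lim_seq_ext (sum_n c)). intros; apply sum_n_Reals. exact H. Qed.

Lemma final_step (D : R -> R) mu E I0 J s : 0 < mu -> 1 <= E -> (s = 1 \/ s = -1) ->
  (forall t, 0 <= t <= 1 -> 0 <= s * D t) -> is_RInt D 0 1 I0 ->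
  is_RInt (fun t => exp (- mu * t) * D t) 0 1 J ->
  / E * Rabs (E * J) <= RInt (fun t => Rabs (D t)) 0 1 /\
  RInt (fun t => Rabs (D t)) 0 1 <= exp mu * Rabs (E * J).
Proof.
  intros Hmu HE Hs HsD HI HJ.
  assert (Habs : forall t, 0 <= t <= 1 -> Rabs (D t) = s * D t).
  { intros t Ht. specialize (HsD t Ht). destruct Hs; subst s.
    rewrite Rabs_pos_eq; lra. rewrite Rabs_left1; lra. }
  assert (HsI : is_RInt (fun t => s * D t) 0 1 (s * I0)) by (apply (is_RInt_scal D 0 1 s I0 HI)).
  assert (HsJ : is_RInt (fun t => exp (- mu * t) * (s * D t)) 0 1 (s * J)).
  { apply (is_RInt_ext (fun t => s * (exp (- mu * t) * D t))). intros; ring_simplify; unfold scal; simpl; unfold mult; simpl; ring.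
    apply (is_RInt_scal _ 0 1 s J HJ). }
  assert (HeI : is_RInt (fun t => exp (- mu) * (s * D t)) 0 1 (exp (- mu) * (s * I0)))
    by (apply (is_RInt_scal _ 0 1 (exp (- mu)) _ HsI)).
  assert (Hr : RInt (fun t => Rabs (D t)) 0 1 = s * I0).
  { apply is_RInt_unique. apply (is_RInt_ext (fun t => s * D t)).
    intros t Ht. rewrite Rmin_left in Ht by lra. rewrite Rmax_right in Ht by lra.
    rewrite Habs; auto; lra. exact HsI. }
  assert (H1 : exp (- mu) * (s * I0) <= s * J).
  { apply (is_RInt_le _ _ 0 1 _ _ (Rle_0_1) HeI HsJ).
    intros t Ht. apply Rmult_le_compat_r. apply HsD; lra. apply exp_le'. nra. }
  assert (H2 : s * J <= s * I0).
  { apply (is_RInt_le _ _ 0 1 _ _ (Rle_0_1) HsJ HsI).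
    intros t Ht. assert (exp (- mu * t) <= 1) by (rewrite <- exp_0; apply exp_le'; nra).
    assert (0 <= s * D t) by (apply HsD; lra). nra. }
  assert (Hem : exp (- mu) < 1) by (rewrite <- exp_0; apply exp_increasing; lra).
  assert (Hep : 0 < exp (- mu)) by apply exp_pos.
  assert (H0 : 0 <= s * I0) by nra.
  assert (HJ0 : 0 <= s * J) by nra.
  assert (HaJ : Rabs J = s * J).
  { destruct Hs; subst s. rewrite Rabs_pos_eq; lra. rewrite Rabs_left1; lra. }
  rewrite Hr, Rabs_mult, HaJ, (Rabs_pos_eq E) by lra.
  assert (Hee : exp mu * exp (- mu) = 1) by (rewrite <- exp_plus; replace (mu + - mu) with 0 by ring; apply exp_0).
  assert (0 < exp mu) by apply exp_pos.
  split.
  - rewrite <- Rmult_assoc, Rinv_l by lra. lra.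
  - assert (s * I0 <= exp mu * (s * J)).
    { replace (s * I0) with (exp mu * (exp (- mu) * (s * I0))) by (rewrite <- Rmult_assoc, Hee; ring).
      apply Rmult_le_compat_l; lra. }
    assert (exp mu * (s * J) <= exp mu * (E * (s * J))).
    { apply Rmult_le_compat_l. lra. nra. }
    lra.
Qed.

Theorem proposition1 (p : nat -> R) :
  is_pmf_finite_mean p -> in_Delta p ->
  forall (mu : R) (k : nat), 0 < mu ->
    / expsum k mu * Rabs (T_k p k mu) <= RInt (fun t => Rabs (D_tmu p t mu)) 0 1 /\
    RInt (fun t => Rabs (D_tmu p t mu)) 0 1 <= exp mu * Rabs (T_k p k mu).
Proof.
  intros Hp HD mu k Hmu.
  destruct Hp as [Hp0 [Hp1 Hpm]].
  set (b := fun n => INR (S n) * p (S n)).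
  assert (Hb0 : forall n, 0 <= b n).
  { intros n; unfold b. apply Rmult_le_pos; [apply pos_INR|apply Hp0]. }
  assert (Hbs : ex_series b).
  { apply (proj1 (ex_series_incr_1 (fun n => INR n * p n))). exact Hpm. }
  assert (Hps : ex_series p) by (exists 1; exact Hp1).
  set (D := fun t => D_tmu p t mu).
  set (DN := fun N t => sum_f_R0 (fun n => b n * t ^ n) N - mu * sum_f_R0 (fun n => p n * t ^ n) (S N)).
  set (eps := fun N => (Series b - sum_f_R0 b N) + mu * (1 - sum_f_R0 p (S N))).
  assert (Hbound : forall N t, 0 <= t <= 1 -> Rabs (DN N t - D t) <= eps N).
  { intros N t Ht.
    destruct (tail_bound (fun n => b n * t ^ n) b Hb0 Hbs) as [_ Tb].
    { intros n. rewrite Rabs_mult. rewrite (Rabs_pos_eq (b n)) by auto.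
      rewrite Rabs_pos_eq by (apply pow_le1; auto).
      destruct (pow_le1 t n Ht). specialize (Hb0 n). nra. }
    destruct (tail_bound (fun n => p n * t ^ n) p Hp0 Hps) as [_ Tp].
    { intros n. rewrite Rabs_mult. rewrite (Rabs_pos_eq (p n)) by auto.
      rewrite Rabs_pos_eq by (apply pow_le1; auto).
      destruct (pow_le1 t n Ht). specialize (Hp0 n). nra. }
    specialize (Tb N). specialize (Tp (S N)).
    rewrite (is_series_unique p 1 Hp1) in Tp.
    unfold D, D_tmu, pgf', pgf, DN, eps.
    change (fun n : nat => INR (S n) * p (S n) * t ^ n) with (fun n => b n * t ^ n).
    set (x := Series (fun n => b n * t ^ n) - sum_f_R0 (fun n => b n * t ^ n) N) in *.
    set (y := Series (fun n => p n * t ^ n) - sum_f_R0 (fun n => p n * t ^ n) (S N)) in *.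
    replace (sum_f_R0 (fun n : nat => b n * t ^ n) N - mu * sum_f_R0 (fun n : nat => p n * t ^ n) (S N) -
      (Series (fun n : nat => b n * t ^ n) - mu * Series (fun n : nat => p n * t ^ n)))
      with (- (x - mu * y)) by (unfold x, y; ring).
    rewrite Rabs_Ropp. unfold Rminus at 1. eapply Rle_trans. apply Rabs_triang.
    rewrite Rabs_Ropp, Rabs_mult, (Rabs_pos_eq mu) by lra.
    assert (0 <= Rabs y) by apply Rabs_pos. nra. }
  assert (Heps : is_lim_seq eps 0).
  { assert (H1 : is_lim_seq (sum_f_R0 b) (Series b)) by (apply series_lim, Series_correct, Hbs).
    assert (H2 : is_lim_seq (fun N => sum_f_R0 p (S N)) 1)
      by (apply (is_lim_seq_incr_1 (sum_f_R0 p)), series_lim, Hp1).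
    assert (H3 := is_lim_seq_plus' _ _ _ _ (is_lim_seq_minus' _ _ _ _ (is_lim_seq_const (Series b)) H1)
       (is_lim_seq_scal_l _ mu _ (is_lim_seq_minus' _ _ _ _ (is_lim_seq_const 1) H2))).
    simpl in H3. replace (Series b - Series b + mu * (1 - 1)) with 0 in H3 by ring. exact H3. }
  assert (HcontDN : forall N t, continuous (DN N) t).
  { intros N t. apply (@ex_derive_continuous R_AbsRing R_NormedModule). unfold DN.
    apply (ex_derive_minus (fun t => sum_f_R0 (fun n => b n * t ^ n) N)
       (fun t => mu * sum_f_R0 (fun n => p n * t ^ n) (S N))).
    apply poly_ex_derive. apply ex_derive_scal. apply poly_ex_derive. }
  destruct (unif_RInt DN D eps (fun N => RInt (DN N) 0 1) Hbound Heps) as [I0 [_ HI0]].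
  { intros N. apply (@RInt_correct R_CompleteNormedModule). apply (@ex_RInt_continuous R_CompleteNormedModule). intros; apply HcontDN. }
  assert (Hexp : forall t, is_derive (fun t => exp (- mu * t)) t (- mu * exp (- mu * t))).
  { intros t. auto_derive; auto. ring. }
  set (F := fun N t => exp (- mu * t) * sum_f_R0 (fun n => p n * t ^ n) (S N)).
  set (J := exp (- mu) - p 0%nat).
  destruct (unif_RInt (fun N t => exp (- mu * t) * DN N t) (fun t => exp (- mu * t) * D t) eps
     (fun N => minus (F N 1) (F N 0)) ) as [J' [HJ' HJ]].
  { intros N t Ht. rewrite <- Rmult_minus_distr_l, Rabs_mult, Rabs_pos_eq by (left; apply exp_pos).
    assert (exp (- mu * t) <= 1).
    { rewrite <- exp_0. apply exp_le'. nra. }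
    specialize (Hbound N t Ht). assert (0 <= Rabs (DN N t - D t)) by apply Rabs_pos.
    assert (0 < exp (- mu * t)) by apply exp_pos. nra. }
  { exact Heps. }
  { intros N. apply (is_RInt_derive (F N)).
    - intros t _. unfold F, DN.
      eapply is_derive_eq.
      apply (is_derive_mult (fun t => exp (- mu * t)) (fun t => sum_f_R0 (fun n => p n * t ^ n) (S N))).
      + apply Hexp.
      + apply poly_derive.
      + intros; apply Rmult_comm.
      + unfold b, plus, mult; simpl. ring.
    - intros t _. apply (@ex_derive_continuous R_AbsRing R_NormedModule).
      apply ex_derive_mult. auto_derive; auto.
      apply (ex_derive_minus (fun t => sum_f_R0 (fun n => b n * t ^ n) N)
       (fun t => mu * sum_f_R0 (fun n => p n * t ^ n) (S N))).
      apply poly_ex_derive. apply ex_derive_scal. apply poly_ex_derive. }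
  assert (HJeq : J' = J).
  { assert (H2 : is_lim_seq (fun N => minus (F N 1) (F N 0)) J).
    { apply (is_lim_seq_ext (fun N => exp (- mu) * sum_f_R0 p (S N) - p 0%nat)).
      intros N. unfold F, minus, plus, opp; simpl.
      replace (- mu * 1) with (- mu) by ring. replace (- mu * 0) with 0 by ring. rewrite exp_0, sum_pow1, sum_pow0. rewrite pow1. ring.
      unfold J. 
      assert (H2 : is_lim_seq (fun N => sum_f_R0 p (S N)) 1)
        by (apply (is_lim_seq_incr_1 (sum_f_R0 p)), series_lim, Hp1).
      assert (H3 := is_lim_seq_minus' _ _ _ _ (is_lim_seq_scal_l _ (exp (- mu)) _ H2) (is_lim_seq_const (p 0%nat))).
      simpl in H3. rewrite Rmult_1_r in H3. exact H3. }
    apply is_lim_seq_unique in H2. apply is_lim_seq_unique in HJ'. rewrite HJ' in H2.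
    exact H2. }
  rewrite HJeq in HJ. clear HJ' HJeq J'.
  replace (T_k p k mu) with (expsum k mu * J) by (unfold T_k, f_k, J; ring).
  assert (HE : 1 <= expsum k mu) by (apply expsum_ge1; lra).
  destruct HD as [_ HD]. destruct (HD mu Hmu) as [Hpos | Hneg].
  - apply (final_step D mu (expsum k mu) I0 J 1 Hmu HE (or_introl eq_refl)); auto.
    intros t Ht. rewrite Rmult_1_l. apply Hpos; auto.
  - apply (final_step D mu (expsum k mu) I0 J (-1) Hmu HE (or_intror eq_refl)); auto.
    intros t Ht. specialize (Hneg t Ht). unfold D. lra.
Qed.
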